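(* For any integers $n \ge k \ge 1$ and any positive integers $n_1 \le n_2 \le \cdots \le n_k$ with $n_1 + \cdots + n_k = n$, the graph $G(n_1,\ldots,n_k)$ has exactly $kn - \binom{k+1}{2}$ edges.
   Context: The graph $G(n_1,\ldots,n_k)$: for each $1 \le i \le k$ it contains a path on distinct vertices $v_{i,1},\ldots,v_{i,n_i}$ (edges $v_{i,a}v_{i,a+1}$ for $1 \le a < n_i$), with all $n$ vertices distinct, and additionally, for each $1 \le i < j \le k$, the following edges: (i) if $n_i > 1$, the edge $v_{i,a}v_{j,a}$ for each $1 \le a < n_i$; (ii) if $n_j > 1$, the edge $v_{i,a+1}v_{j,a}$ for each $1 \le a < n_i$; (iii) the edge $v_{i,n_i}v_{j,a}$ for each $n_i \le a \le n_j$. These are all the edges. *)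

(* Defs.v *)
From mathcomp Require Import all_boot.
Set Implicit Arguments. Unset Strict Implicit. Unset Printing Implicit Defensive.

(* The graph G(n_1,...,n_k).  Indices are 1-based as in the paper:
   [ns i] is n_i for 1 <= i <= k, and vertex v_{i,a} is the pair (i, a)
   with 1 <= i <= k and 1 <= a <= n_i. *)

Definition is_vtx (k : nat) (ns : nat -> nat) (v : nat * nat) : bool :=
  (1 <= v.1 <= k) && (1 <= v.2 <= ns v.1).

(* [G_adj k ns u v]: {u, v} is one of the listed edges, with u playing the
   role of the first-written endpoint. *)
Definition G_adj (k : nat) (ns : nat -> nat) (u v : nat * nat) : bool :=
  let i := u.1 in let a := u.2 in let j := v.1 in let b := v.2 in
  [|| (* path edges v_{i,a} v_{i,a+1}, 1 <= a < n_i *)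
      [&& i == j, b == a.+1 & 1 <= a < ns i],
      (* (i) i < j, n_i > 1 : v_{i,a} v_{j,a}, 1 <= a < n_i *)
      [&& i < j, 1 < ns i, b == a & 1 <= a < ns i],
      (* (ii) i < j, n_j > 1 : v_{i,a+1} v_{j,a}, 1 <= a < n_i *)
      [&& i < j, 1 < ns j, a == b.+1 & 1 <= b < ns i] |
      (* (iii) i < j : v_{i,n_i} v_{j,b}, n_i <= b <= n_j *)
      [&& i < j, a == ns i & ns i <= b <= ns j]].

(* Vertex carrier: pairs (i, a) with i <= k, a <= n (where n = sum of n_i). *)
Definition Gvert (k n : nat) := ('I_k.+1 * 'I_n.+1)%type.

Definition Gv (k n : nat) (x : Gvert k n) : nat * nat :=
  (nat_of_ord x.1, nat_of_ord x.2).

Definition G_edges (k n : nat) (ns : nat -> nat) : {set {set Gvert k n}} :=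
  [set e : {set Gvert k n} |
     [exists u : Gvert k n, exists v : Gvert k n,
        [&& e == [set u; v], u != v, is_vtx k ns (Gv u), is_vtx k ns (Gv v)
          & G_adj k ns (Gv u) (Gv v)]]].

(* Main.v *)
Require Import Defs.
From mathcomp Require Import all_boot zify.

Lemma sumL1 N lo hi : \sum_(a < N) (lo <= a < hi : nat) = minn hi N - lo.
Proof.
elim: N => [|N IH]; first by rewrite big_ord0; lia.
rewrite big_ord_recr /= IH; lia.
Qed.

Lemma sumD1 N (c : nat) (P : bool) : \sum_(b < N) (P && (val b == c) : nat) = P && (c < N).
Proof.
elim: N => [|N IH]; first by rewrite big_ord0; case: P.
rewrite big_ord_recr /= IH; lia.
Qed.

Definition F k ns (u v : nat * nat) : nat :=
  [&& is_vtx k ns u, is_vtx k ns v & G_adj k ns u v].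

Lemma adj_orient k ns u v : G_adj k ns u v -> (u.1 < v.1) || (u.1 == v.1) && (u.2 < v.2).
Proof. rewrite /G_adj /=. lia. Qed.

Lemma card_edges k n ns :
  #|G_edges k n ns| = \sum_(i < k.+1) \sum_(a < n.+1) \sum_(j < k.+1) \sum_(b < n.+1)
     F k ns (i : nat, a : nat) (j : nat, b : nat).
Proof.
set S := [set p : Gvert k n * Gvert k n |
   [&& is_vtx k ns (Gv p.1), is_vtx k ns (Gv p.2) & G_adj k ns (Gv p.1) (Gv p.2)]].
have gv_inj : injective (@Gv k n).
  by move=> [x1 x2] [y1 y2] [/val_inj -> /val_inj ->].
have neq : forall x y : Gvert k n, G_adj k ns (Gv x) (Gv y) -> x != y.
  move=> x y /adj_orient H; apply/eqP => E; subst y; move: H; lia.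
have anti : forall x y : Gvert k n, G_adj k ns (Gv x) (Gv y) -> G_adj k ns (Gv y) (Gv x) -> False.
  move=> x y /adj_orient H1 /adj_orient H2; move: H1 H2 => /=. lia.
have -> : G_edges k n ns = [set [set p.1; p.2] | p in S].
  apply/setP => e; rewrite inE; apply/existsP/imsetP.
  - move=> [u /existsP [v /and5P [/eqP -> _ H1 H2 H3]]].
    by exists (u, v) => //; rewrite inE /= H1 H2 H3.
  - move=> [[u v]]; rewrite inE /= => /and3P [H1 H2 H3] ->.
    exists u; apply/existsP; exists v; rewrite eqxx H1 H2 H3 neq //.
rewrite card_in_imset; last first.
  move=> [u v] [u' v']; rewrite !inE /= => /and3P [_ _ A] /and3P [_ _ A'] E.
  have : u \in [set u'; v'] by rewrite -E set21.
  have : v \in [set u'; v'] by rewrite -E set22.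
  have : u' \in [set u; v] by rewrite E set21.
  move=> /set2P [] E3 /set2P [] E2 /set2P [] E1; subst => //;
  first [ by move: (neq _ _ A); rewrite eqxx | by move: (neq _ _ A'); rewrite eqxx
        | by case: (anti _ _ A A') | by case: (anti _ _ A' A) ].
rewrite -sum1_card big_mkcond /=.
rewrite (eq_bigr (fun p => (fun u v => if (u, v) \in S then 1 else 0) p.1 p.2)); last by case.
rewrite -(pair_bigA _ (fun u v => if (u, v) \in S then 1 else 0)) /=.
rewrite (eq_bigr (fun p => (fun i a => \sum_(v : Gvert k n) if ((i, a), v) \in S then 1 else 0) p.1 p.2)); last by case.
rewrite -(pair_bigA _ (fun i a => \sum_(v : Gvert k n) if ((i, a), v) \in S then 1 else 0)) /=.
apply: eq_bigr => i _; apply: eq_bigr => a _.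
rewrite (eq_bigr (fun p => (fun j b => if ((i, a), (j,b)) \in S then 1 else 0) p.1 p.2)); last by case.
rewrite -(pair_bigA _ (fun j b => if ((i, a), (j,b)) \in S then 1 else 0)) /=.
apply: eq_bigr => j _; apply: eq_bigr => b _.
by rewrite inE /F /Gv /=; case: ifP.
Qed.

Lemma pt_lt0 (a b x y : nat) : 0 < x -> x <= y ->
  ([&& (0 < a <= x), (0 < b <= y) &
   [|| [&& 1 < x, b == a & 0 < a < x],
      [&& 1 < y, a == b.+1 & 0 < b < x] |
      [&& a == x & x <= b <= y]]] : nat)
  = ((0 < a < x) && (b == a) : nat) + ((0 < b < x) && (a == b.+1) : nat) + ((x <= b <= y) && (a == x) : nat).
Proof.
move=> x0 xy.
have [->|ba] := eqVneq b a.
  have -> : (a == a.+1) = false by elim: a.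
  have [->|ax] := eqVneq a x; rewrite /= ?andbF ?andbT ?orbF /=; lia.
have [->|ab] := eqVneq a b.+1.
  have [bx|bx] := eqVneq b.+1 x; [subst x|]; rewrite /= ?andbF ?andbT ?orbF /=; lia.
have [->|ax] := eqVneq a x; rewrite /= ?andbF ?andbT ?orbF /=; lia.
Qed.

Lemma pt_lt k ns (i j a b : nat) : 0 < i -> i < j -> j <= k -> 0 < ns i -> ns i <= ns j ->
  F k ns (i, a) (j, b) =
  ((0 < a < ns i) && (b == a) : nat) + ((0 < b < ns i) && (a == b.+1) : nat)
  + ((ns i <= b <= ns j) && (a == ns i) : nat).
Proof.
move=> i0 ij jk x0 xy.
have ik : (0 < i <= k) by rewrite i0 (leq_trans (ltnW ij) jk).
have jk' : (0 < j <= k) by rewrite jk (leq_trans i0 (ltnW ij)).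
rewrite /F /is_vtx /G_adj /= ij (ltn_eqF ij) ik jk' /=.
rewrite -pt_lt0 //.
Qed.

Lemma pt_eq k ns (i a b : nat) : 0 < i <= k ->
  F k ns (i, a) (i, b) = ((0 < a < ns i) && (b == a.+1) : nat).
Proof.
move=> ik; rewrite /F /is_vtx /G_adj /= ltnn eqxx ik /= ?andbF ?orbF.
have [->|ba] := eqVneq b a.+1; rewrite /= ?andbF ?andbT; lia.
Qed.

Lemma pt_gt k ns (i j a b : nat) : j < i -> F k ns (i, a) (j, b) = 0.
Proof.
move=> ji; rewrite /F /G_adj /= (gtn_eqF ji) (ltnNge i j) (ltnW ji) /=.
by rewrite !andbF.
Qed.

Lemma pt_0l k ns (j a b : nat) : F k ns (0, a) (j, b) = 0.
Proof. by []. Qed.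

Lemma pt_0r k ns (i a b : nat) : F k ns (i, a) (0, b) = 0.
Proof. by rewrite /F /is_vtx /= !andbF. Qed.

Definition C (ns : nat -> nat) (i j : nat) : nat :=
  if (0 < i) && (0 < j) then (if i == j then ns i - 1 else if i < j then ns i + ns j - 1 else 0) else 0.

Lemma inner k n ns (i j : nat) : i <= k -> j <= k ->
  (forall l, 1 <= l <= k -> 0 < ns l <= n) ->
  (forall l m, 1 <= l <= m -> m <= k -> ns l <= ns m) ->
  \sum_(a < n.+1) \sum_(b < n.+1) F k ns (i, val a) (j, val b) = C ns i j.
Proof.
move=> ik jk Hn Hm; rewrite /C.
have [->|i0] := posnP i.
  by rewrite big1 // => a _; rewrite big1 // => b _; rewrite pt_0l.
have [->|j0] := posnP j.
  by rewrite big1 // => a _; rewrite big1 // => b _; rewrite pt_0r.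
rewrite /=.
case: (ltngtP i j) => ij.
- have Hij : ns i <= ns j by apply: Hm => //; rewrite i0 (ltnW ij).
  have /andP [ni0 nin] : 0 < ns i <= n by apply: Hn; rewrite i0.
  rewrite (eq_bigr (fun a : 'I_n.+1 => \sum_(b < n.+1) ((0 < a < ns i) && (val b == a) : nat)
     + \sum_(b < n.+1) ((0 < b < ns i) && (val a == b.+1) : nat)
     + \sum_(b < n.+1) ((ns i <= b <= ns j) && (val a == ns i) : nat))); last first.
    move=> a _; rewrite -!big_split; apply: eq_bigr => b _ /=.
    by rewrite pt_lt.
  rewrite !big_split /=.
  have E1 : \sum_(a < n.+1) \sum_(b < n.+1) ((0 < a < ns i) && (val b == a) : nat) = ns i - 1.
    under eq_bigr => a _ do rewrite sumD1.
    rewrite (eq_bigr (fun a : 'I_n.+1 => (0 < a < ns i : nat))); last by move=> a _; rewrite ltn_ord andbT.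
    by rewrite sumL1 (minn_idPl (leq_trans nin (leqnSn n))).
  have E2 : \sum_(a < n.+1) \sum_(b < n.+1) ((0 < b < ns i) && (val a == b.+1) : nat) = ns i - 1.
    rewrite exchange_big /=.
    under eq_bigr => b _ do rewrite sumD1.
    rewrite (eq_bigr (fun a : 'I_n.+1 => (0 < a < ns i : nat))); last first.
      move=> a _; case: (ltnP a (ns i)) => H; rewrite ?andbF ?andbT //.
      by rewrite ltnS (leq_trans H nin) ?andbT.
    by rewrite sumL1 (minn_idPl (leq_trans nin (leqnSn n))).
  have E3 : \sum_(a < n.+1) \sum_(b < n.+1) ((ns i <= b <= ns j) && (val a == ns i) : nat) = (ns j).+1 - ns i.
    rewrite exchange_big /=.
    under eq_bigr => b _ do rewrite sumD1.
    rewrite (eq_bigr (fun a : 'I_n.+1 => (ns i <= a < (ns j).+1 : nat))); last by move=> a _; rewrite ltnS nin andbT.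
    have /andP [_ njn] : 0 < ns j <= n by apply: Hn; rewrite jk (leq_trans i0 (ltnW ij)).
    by rewrite sumL1 (minn_idPl (_ : (ns j).+1 <= n.+1)) // ltnS.
  rewrite E1 E2 E3; lia.
- by rewrite big1 // => a _; rewrite big1 // => b _; rewrite pt_gt.
- subst j; rewrite ?eqxx.
  have /andP [ni0 nin] : 0 < ns i <= n by apply: Hn; rewrite i0.
  rewrite (eq_bigr (fun a : 'I_n.+1 => \sum_(b < n.+1) ((0 < a < ns i) && (val b == a.+1) : nat))); last first.
    by move=> a _; apply: eq_bigr => b _; rewrite pt_eq // i0.
  rewrite (eq_bigr (fun a : 'I_n.+1 => (0 < a < ns i : nat))); last first.
    move=> a _; rewrite sumD1; case: (ltnP a (ns i)) => H; rewrite ?andbF ?andbT //.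
    by rewrite ltnS (leq_trans H nin) ?andbT.
  by rewrite sumL1 (minn_idPl (leq_trans nin (leqnSn n))).
Qed.

Lemma Tsum k ns : (forall l, 1 <= l <= k -> 0 < ns l) -> forall m, m <= k ->
  \sum_(0 <= i < m.+1) \sum_(0 <= j < m.+1) C ns i j + 'C(m.+1, 2) = m * \sum_(1 <= i < m.+1) ns i.
Proof.
move=> Hp; elim=> [|m IH] mk.
  by rewrite !big_nat1 /C.
have x0 : 0 < ns m.+1 by apply: Hp; lia.
rewrite big_nat_recr //=.
rewrite (eq_big_nat _ _ (F2 := fun i => \sum_(0 <= j < m.+1) C ns i j + C ns i m.+1)); last first.
  by move=> i _; rewrite big_nat_recr.
rewrite big_split /=.
have -> : \sum_(0 <= j < m.+2) C ns m.+1 j = ns m.+1 - 1.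
  rewrite big_nat_recr //= big_nat_cond big1; last first.
    move=> j /andP [/andP [_ jm] _]; rewrite /C.
    have -> : (m.+1 == j) = false by lia.
    have -> : (m.+1 < j) = false by lia.
    by case: ifP.
  by rewrite /C eqxx.
have -> : \sum_(0 <= i < m.+1) C ns i m.+1 = \sum_(1 <= i < m.+1) ns i + m * (ns m.+1 - 1).
  rewrite big_ltn // {1}/C /= add0n.
  rewrite (eq_big_nat _ _ (F2 := fun i => ns i + (ns m.+1 - 1))); last first.
    move=> i /andP [i1 im]; rewrite /C.
    have -> : (0 < i) && (0 < m.+1) by lia.
    have -> : (i == m.+1) = false by lia.
    have -> : (i < m.+1) = true by lia.
    lia.
  by rewrite big_split /= sum_nat_const_nat subn1.
rewrite (big_nat_recr _ _ _ (isT : 1 <= m.+1)) /=.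
rewrite binS bin1.
have := IH (ltnW mk).
move: (\sum_(0 <= i < m.+1) \sum_(0 <= j < m.+1) C ns i j) (\sum_(1 <= i < m.+1) ns i) => T S.
nia.
Qed.

Theorem lemma4 (n k : nat) (ns : nat -> nat) :
  1 <= k -> k <= n ->
  (forall i, 1 <= i <= k -> 0 < ns i) ->
  (forall i, 1 <= i < k -> ns i <= ns i.+1) ->
  \sum_(1 <= i < k.+1) ns i = n ->
  #|G_edges k n ns| = k * n - 'C(k.+1, 2).
Proof.
move=> k1 kn Hp Hs Hsum.
have Hn : forall l, 1 <= l <= k -> 0 < ns l <= n.
  move=> l /andP [l1 lk]; rewrite Hp ?l1 ?lk //=.
  rewrite -Hsum (big_cat_nat (n := l)) //= ?(ltnW lk) //; last by lia.
  rewrite [X in _ + X]big_ltn; last by lia.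
  lia.
have Hm : forall l m, 1 <= l <= m -> m <= k -> ns l <= ns m.
  move=> l; elim=> [|m IH] lm mk; first by lia.
  have [->|lm'] := eqVneq l m.+1; first by [].
  apply: leq_trans (IH _ _) (Hs _ _); lia.
rewrite card_edges.
rewrite (eq_bigr (fun i : 'I_k.+1 => \sum_(0 <= j < k.+1) C ns i j)); last first.
  move=> i _; rewrite exchange_big big_mkord; apply: eq_bigr => j _.
  apply: inner => //; rewrite -ltnS; exact: ltn_ord.
rewrite -(big_mkord xpredT (fun i => \sum_(0 <= j < k.+1) C ns i j)).
have := @Tsum k ns Hp k (leqnn k); rewrite Hsum => <-; by rewrite addnK.
Qed.
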